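(* Let $\mathcal{H}$ be a real or complex Hilbert space, $\Sigma\subset\mathcal{H}$ a cone, and $f:\mathcal{H}\to\mathbb{R}\cup\{+\infty\}$ a proper, coercive, continuous regularizer. Assume that for some $t>f(0)$ the level set $\mathcal{L}(f,t)=\{y\in\mathcal{H}:f(y)\le t\}$ is convex. Then there exists a family of atoms $\mathcal{A}\subset\Sigma$ such that $$\mathcal{T}_{\mathcal{A}}(\Sigma)\subset\mathbb{R}_+^*\cdot\mathcal{T}_f(\Sigma).$$
   Context: $\Sigma$ is a cone if $tz\in\Sigma$ for all $t\ge0$, $z\in\Sigma$. Coercive: $f(x)\to+\infty$ as $\|x\|_{\mathcal{H}}\to+\infty$. Atomic norm of $\mathcal{A}$: $\|x\|_{\mathcal{A}}=\inf\{s\ge0:x\in s\cdot\overline{\mathrm{conv}}(\mathcal{A})\}$ ($+\infty$ if none). Descent sets: $\mathcal{T}_f(\Sigma)=\bigcup_{x\in\Sigma}\{z:f(x+z)\le f(x)\}$ and $\mathcal{T}_{\mathcal{A}}(\Sigma)=\bigcup_{x\in\Sigma}\{z:\|x+z\|_{\mathcal{A}}\le\|x\|_{\mathcal{A}}\}$. $\mathbb{R}_+^*\cdot T=\{\lambda z:\lambda>0,z\in T\}$. *)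

(* Defs.v *)
From HB Require Import structures.
From mathcomp Require Import all_boot all_order all_algebra.
From mathcomp Require Import all_classical all_reals all_analysis.
Set Implicit Arguments. Unset Strict Implicit. Unset Printing Implicit Defensive.
Import Order.TTheory GRing.Theory Num.Theory.
Import numFieldNormedType.Exports.
Local Open Scope classical_set_scope.
Local Open Scope ring_scope.

Definition is_inner_product (R : realType) (V : normedModType R)
  (ip : V -> V -> R) : Prop :=
  [/\ (forall x y, ip x y = ip y x),
      (forall a x y z, ip (a *: x + y) z = a * ip x z + ip y z),
      (forall x, 0 <= ip x x) &
      (forall x, `|x| = Num.sqrt (ip x x))].

Definition is_cone (R : realType) (V : lmodType R) (S : set V) : Prop :=
  forall (t : R) z, 0 <= t -> S z -> S (t *: z).

Definition convex_set_of (R : realType) (V : lmodType R) (C : set V) : Prop :=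
  forall x y (l : R), C x -> C y -> 0 <= l <= 1 -> C (l *: x + (1 - l) *: y).

Definition conv_hull (R : realType) (V : lmodType R) (A : set V) : set V :=
  [set x | exists n (w : 'I_n -> R) (a : 'I_n -> V),
     [/\ (forall i, A (a i)), (forall i, 0 <= w i), \sum_(i < n) w i = 1 &
         x = \sum_(i < n) w i *: a i]].

Definition scale_set (R : realType) (V : lmodType R) (s : R) (S : set V) : set V :=
  [set s *: y | y in S].

(* atomic norm: inf {s >= 0 : x \in s . closure(conv A)}, +oo if empty *)
Definition atomic_norm (R : realType) (V : normedModType R) (A : set V) (x : V)
  : \bar R :=
  ereal_inf [set s%:E | s in [set s : R | 0 <= s /\
                        scale_set s (closure (conv_hull A)) x]].

Definition descent_set (R : realType) (V : lmodType R) (g : V -> \bar R)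
  (S : set V) : set V :=
  \bigcup_(x in S) [set z : V | Order.le (g (x + z)) (g x)].

Definition pos_rescale (R : realType) (V : lmodType R) (T : set V) : set V :=
  [set y | exists l : R, exists2 z, 0 < l /\ T z & y = l *: z].

Definition proper_fun (R : realType) (V : Type) (f : V -> \bar R) : Prop :=
  (forall x, f x != -oo%E) /\ (exists x, f x != +oo%E).

Definition coercive (R : realType) (V : normedModType R) (f : V -> \bar R) : Prop :=
  forall M : R, exists r : R, forall x : V, r < `|x| -> Order.lt (M%:E) (f x).

Definition level_set (R : realType) (V : Type) (f : V -> \bar R) (t : R) : set V :=
  [set y | Order.le (f y) (t%:E)].

(* Main.v *)
Require Import Defs.
From HB Require Import structures.
From mathcomp Require Import all_boot all_order all_algebra.
From mathcomp Require Import all_classical all_reals all_analysis.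
Import Order.TTheory GRing.Theory Num.Theory.
Import numFieldNormedType.Exports.
Local Open Scope classical_set_scope.
Local Open Scope ring_scope.
Lemma hull_sub (R : realType) (V : lmodType R) (C : set V) :
  convex_set_of C -> forall n (w : 'I_n -> R) (a : 'I_n -> V),
  (forall i, C (a i)) -> (forall i, 0 <= w i) -> \sum_(i < n) w i = 1 ->
  C (\sum_(i < n) w i *: a i).
Proof.
move=> hC; elim=> [|n IH] w a Ca w0 w1.
  by move: w1; rewrite big_ord0 => /eqP; rewrite eq_sym oner_eq0.
rewrite big_ord_recr /=; move: w1; rewrite big_ord_recr /= => w1.
set c := w ord_max in w1 *.
have rest0 : 0 <= \sum_(i < n) w (widen_ord (leqnSn n) i).
  by apply: sumr_ge0 => i _.
have c1 : c <= 1 by rewrite -w1 lerDr.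
have [ceq1|cne1] := eqVneq c 1.
  have r0 : \sum_(i < n) w (widen_ord (leqnSn n) i) = 0.
    by move: w1; rewrite ceq1 => /(canRL (addrK 1)); rewrite subrr.
  rewrite big1 ?add0r ?ceq1 ?scale1r //.
  move=> i _; rewrite (psumr_eq0P (P := predT) (F := fun i => w (widen_ord (leqnSn n) i))) ?scale0r //.
have cpos : 0 < 1 - c by rewrite subr_gt0 lt_neqAle cne1 c1.
pose w' i := w (widen_ord (leqnSn n) i) / (1 - c).
have := IH w' (fun i => a (widen_ord (leqnSn n) i)) (fun i => Ca _) _ _.
move=> /(_ _ _) H.
have H' := H (fun i => divr_ge0 (w0 _) (ltW cpos)).
have sw : \sum_(i < n) w' i = 1.
  rewrite /w' -mulr_suml.
  have -> : \sum_(i < n) w (widen_ord (leqnSn n) i) = 1 - c by rewrite -w1 addrK.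
  by rewrite divff // gt_eqF.
have := hC _ _ c (Ca ord_max) (H' sw); rewrite c1 w0 => /(_ isT).
congr C; rewrite addrC; congr (_ + _).
rewrite scaler_sumr; apply: eq_bigr => i _.
by rewrite scalerA /w' mulrCA divff ?mulr1 // gt_eqF.
Qed.
Lemma near_lt (R : realType) (V : normedModType R) (f : V -> \bar R)
  (fcont : continuous f) p (c : \bar R) : (f p < c)%E -> nbhs p [set y | (f y < c)%E].
Proof.
move=> H; apply: (fcont p [set e | (e < c)%E]).
exact: (open_nbhs_nbhs (conj (@open_ereal_lt_ereal _ c) H)).
Qed.

Lemma near_gt (R : realType) (V : normedModType R) (f : V -> \bar R)
  (fcont : continuous f) p (c : \bar R) : (c < f p)%E -> nbhs p [set y | (c < f y)%E].
Proof.
move=> H; apply: (fcont p [set e | (c < e)%E]).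
exact: (open_nbhs_nbhs (conj (@open_ereal_gt_ereal _ c) H)).
Qed.

Lemma near_inv (R : realType) (V : normedModType R) (f : V -> \bar R)
  (fcont : continuous f) (y : V) (a : R) (P : set (\bar R)) :
  a != 0 -> nbhs (a^-1 *: y) (f @^-1` P) ->
  exists2 e : R, 0 < e & forall s, `|a - s| < e -> P (f (s^-1 *: y)).
Proof.
move=> a0 HP.
have hc : (fun s : R => s^-1 *: y) @ a --> a^-1 *: y.
  apply: cvgZr_tmp; exact: (cvgV a0 cvg_id).
have := hc _ HP.
move=> /nbhs_ballP [e e0 He]; exists e => // s hs; apply: He; rewrite -ball_normE /=.

Qed.
Theorem lemma1 (R : realType) (V : completeNormedModType R) (ip : V -> V -> R)
  (Hip : is_inner_product ip) (Sigma : set V) (HSigma : is_cone Sigma)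
  (f : V -> \bar R) (fproper : proper_fun f) (fcoer : coercive f)
  (fcont : continuous f) (t : R) (ht : Order.lt (f 0) (t%:E))
  (hconv : convex_set_of (level_set f t)) :
  exists A : set V, A `<=` Sigma /\
    descent_set (atomic_norm A) Sigma `<=` pos_rescale (descent_set f Sigma).
Proof.
set L := level_set f t.
pose A := [set y | Sigma y /\ L y].
exists A; split; first by move=> y [].
set K := closure (conv_hull A).
have L0 : L 0 by rewrite /L /level_set /=; exact: ltW.
have Lscale : forall y l, L y -> 0 <= l <= 1 -> L (l *: y).
  move=> y l Ly hl; have := hconv y 0 l Ly L0 hl.
  by rewrite scaler0 addr0.
have hullL : conv_hull A `<=` L.
  move=> y [n [w [a [Aa w0 w1 ->]]]].
  by apply: hull_sub => // i; case: (Aa i).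
have KL : K `<=` L.
  move=> k Kk; rewrite /L /level_set /= leNgt; apply/negP => hk.
  have [y [/hullL Ly /= Hy]] := Kk _ (@near_gt _ _ _ fcont _ _ hk).
  by move: Ly; rewrite /L /level_set /= leNgt Hy.
have AK : A `<=` K.
  move=> y Ay; apply: subset_closure.
  exists 1%N, (fun _ => 1), (fun _ => y); split => //.
    by rewrite big_ord1.
  by rewrite big_ord1 scale1r.
set N := atomic_norm A.
have N_ge0 : forall y, (0%:E <= N y)%E.
  by move=> y; apply: le_ereal_inf_tmp => _ [s [s0 _] <-]; rewrite lee_fin.
have N_le : forall y s, 0 <= s -> scale_set s K y -> (N y <= s%:E)%E.
  by move=> y s s0 hy; apply: ereal_inf_lbound; exists s.
have N_lt : forall y b, (N y < b%:E)%E ->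
    exists s, [/\ 0 <= s, s < b & scale_set s K y].
  move=> y b /ereal_inf_lt [_ [s [s0 hs] <-]]; rewrite lte_fin => sb.
  by exists s.
have AK' : forall y s, 0 < s -> Sigma (s^-1 *: y) -> L (s^-1 *: y) ->
    (N y <= s%:E)%E.
  move=> y s s0 Sy Ly; apply: N_le; first exact: ltW.
  exists (s^-1 *: y); first exact: AK.
  by rewrite scalerA divff ?gt_eqF // scale1r.
have N_zero : forall y, (N y <= 0%:E)%E -> y = 0.
  move=> y Ny; apply/eqP; apply/negP => /negP y0.
  have [r Hr] := fcoer t.
  have ny0 : 0 < `|y| by rewrite normr_gt0.
  have r1 : 0 < `|r| + 1 by rewrite ltr_wpDl.
  pose b := `|y| / (`|r| + 1).
  have b0 : 0 < b by rewrite divr_gt0.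
  have [s [s0 sb [k Kk yk]]] : exists s, [/\ 0 <= s, s < b & scale_set s K y].
    by apply: N_lt; apply: (le_lt_trans Ny); rewrite lte_fin.
  have nyk : `|y| = s * `|k| by rewrite -yk normrZ ger0_norm.
  have : r < `|k|.
    rewrite ltNge; apply/negP => hk.
    have hk' : `|k| <= `|r| + 1 by apply: (le_trans hk); apply: (le_trans (ler_norm r)); rewrite lerDl.
    have h1 : s * `|k| <= s * (`|r| + 1) by rewrite ler_wpM2l.
    have h2 : s * (`|r| + 1) < b * (`|r| + 1) by rewrite ltr_pM2r.
    have h3 : b * (`|r| + 1) = `|y| by rewrite /b divfK // gt_eqF.
    by move: h1 h2; rewrite -nyk h3 => h1 h2; have := le_lt_trans h1 h2; rewrite ltxx.
  move=> /Hr; have := KL k Kk; rewrite /L /level_set /= => h1 h2.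
  by move: h1; rewrite leNgt h2.
move=> z [x Sx hxz].
have [->|z0] := eqVneq z 0.
  exists 1, 0; last by rewrite scaler0.
  by split => //; exists x => //=; rewrite addr0.
have hxz' : (N (x + z)%R <= N x)%E by exact: hxz.
have [s0 [s0pos Ls0]] : exists s, 0 < s /\ L (s^-1 *: x).
  have := @near_lt _ _ _ fcont 0 t%:E ht.
  move=> /nbhs_ballP [e e0 He].
  have x1 : 0 < `|x| + 1 by rewrite ltr_wpDl.
  exists ((`|x| + 1) / e); split; first by rewrite divr_gt0.
  apply: ltW; apply: He; rewrite -ball_normE /= sub0r normrN normrZ invf_div.
  rewrite ger0_norm ?divr_ge0 ?ltW //.
  by rewrite mulrAC ltr_pdivrMr // ltr_pM2l // ltrDl.
have Nxle : (N x <= s0%:E)%E.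
  apply: AK' => //; apply: HSigma => //; rewrite invr_ge0 ltW //.
have [a Na] : exists a, N x = a%:E.
  move: Nxle (N_ge0 x); case: (N x) => [a| |] //; by exists a.
have a0 : 0 <= a by rewrite -lee_fin -Na.
have apos : 0 < a.
  rewrite lt_neqAle a0 andbT; apply/negP => /eqP a0'.
  have x0 : x = 0 by apply: N_zero; rewrite Na -a0'.
  move: z0; rewrite (N_zero z) ?eqxx //.
  by move: hxz'; rewrite Na x0 add0r -a0'.
have aneq : a != 0 by rewrite gt_eqF.
have C1 : (t%:E <= f (a^-1 *: x))%E.
  rewrite leNgt; apply/negP => H.
  have [e e0 He] := @near_inv _ _ _ fcont x a [set u | (u < t%:E)%E] aneq
     (@near_lt _ _ _ fcont _ _ H).
  pose m := Num.min e a.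
  have m0 : 0 < m by rewrite lt_min e0 apos.
  have me : m <= e by rewrite ge_min lexx.
  have ma : m <= a by rewrite ge_min lexx orbT.
  pose s := a - m / 2.
  have spos : 0 < s by rewrite /s subr_gt0; apply: (lt_le_trans _ ma); rewrite ltr_pdivrMr // ltr_pMr // ltr1n.
  have sa : s < a by rewrite /s ltrBlDr ltrDl divr_gt0.
  have hs : `|a - s| < e.
    rewrite /s opprB addrC subrK ger0_norm ?divr_ge0 ?ltW //.
    by apply: (lt_le_trans _ me); rewrite ltr_pdivrMr // ltr_pMr // ltr1n.
  have := He s hs => /= Hs.
  have : (N x <= s%:E)%E.
    apply: AK' => //; first by apply: HSigma => //; rewrite invr_ge0 ltW.
    exact: ltW.
  by rewrite Na lee_fin leNgt sa.
have C2 : (f (a^-1 *: (x + z))%R <= t%:E)%E.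
  rewrite leNgt; apply/negP => H.
  have [e e0 He] := @near_inv _ _ _ fcont (x + z) a [set u | (t%:E < u)%E] aneq
     (@near_gt _ _ _ fcont _ _ H).
  pose s := a + e / 2.
  have spos : 0 < s by rewrite /s addr_gt0 // divr_gt0.
  have hs : `|a - s| < e.
    rewrite /s opprD addrA subrr sub0r normrN ger0_norm ?divr_ge0 ?ltW //.
    by rewrite ltr_pdivrMr // ltr_pMr // ltr1n.
  have := He s hs => /= Hs.
  have [s' [s'0 s's [k Kk xzk]]] : exists s', [/\ 0 <= s', s' < s & scale_set s' K (x + z)%R].
    apply: N_lt; apply: (le_lt_trans hxz'); rewrite Na lte_fin /s ltrDl divr_gt0 //.
  have : L (s^-1 *: (x + z)).
    rewrite -xzk scalerA; apply: Lscale; first exact: KL.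
    apply/andP; split; first by rewrite mulr_ge0 // invr_ge0 ltW.
    by rewrite mulrC ler_pdivrMr // mul1r ltW.
  by rewrite /L /level_set /= leNgt Hs.
exists a, (a^-1 *: z); last by rewrite scalerA divff // scale1r.
split => //; exists (a^-1 *: x).
  by apply: HSigma => //; rewrite invr_ge0.
by rewrite /= -scalerDr; apply: (le_trans C2 C1).
Qed.
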